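(* Let $A,B\in\mathrm{SL}_2\mathbb{Z}$ be noncommuting, well oriented, with $2\le\mathrm{tr}(A)<\mathrm{tr}(B)$. Then for all words $w,u$ (possibly empty): (1) $[w]<[u]$ if and only if $[w]\le[u]-1$; (2) if $u$ is a subword of $w$, then $[u]<[w]$, except in the case in which $A$ is parabolic and $w$ is a power of $a$.
   Context: Words are finite (possibly empty) strings over $\{a,b\}$; $\phi$ is the monoid homomorphism with $\phi(a)=A$, $\phi(b)=B$, and $[w]=\mathrm{tr}(\phi(w))$ (so the empty word has $[\,]=2$). A subword of $w$ is a possibly empty word obtained from $w$ by deleting one or more not necessarily contiguous letters. $A$ is parabolic if $\mathrm{tr}(A)=2$. Fixed points are for the Möbius action on $\partial\mathcal{H}=\mathbb{P}^1\mathbb{R}$; $\alpha^\pm$ ($\beta^\pm$) are the attracting/repelling fixed points of $A$ ($B$), both equal to the unique fixed point if parabolic. With $\partial\mathcal{H}$ cyclically ordered and $[\alpha,\beta]$ the closed counterclockwise interval from $\alpha$ to $\beta$, let $I^+=\{\alpha^+\}$ if $\alpha^+=\beta^+$, and otherwise the one of $[\alpha^+,\beta^+],[\beta^+,\alpha^+]$ mapped into itself by both $A$ and $B$ (if it exists); define $I^-$ likewise with $A^{-1},B^{-1},\alpha^-,\beta^-$. The pair is coherently oriented if both exist, and well oriented if $A,B$ is coherently oriented but $A,B^{-1}$ is not. *)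

(* Defs.v *)
From HB Require Import structures.
From mathcomp Require Import all_boot all_order all_algebra.
From Stdlib Require Import Reals.
From mathcomp Require Import Rstruct.
Set Implicit Arguments. Unset Strict Implicit. Unset Printing Implicit Defensive.
Import Order.TTheory GRing.Theory Num.Theory.
Local Open Scope ring_scope.

Definition mat := 'M[int]_2.
Definition inSL2Z (A : mat) : Prop := \det A = 1.

Definition letter := bool.
Definition la : letter := true.
Definition lb : letter := false.
Definition word := seq letter.

Definition phi (A B : mat) (w : word) : mat :=
  foldr (fun l M => (if l then A else B) *m M) 1%:M w.

Definition trw (A B : mat) (w : word) : int := \tr (phi A B w).

Definition subword (u w : word) : Prop := subseq u w /\ u != w.

Definition parabolic (A : mat) : Prop := \tr A = 2.

(* The boundary P^1(R) = R u {oo}: [Some x] is the real x, [None] is oo. *)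
Definition pt := option R.

Definition rmat (A : mat) : 'M[R]_2 := map_mx (fun z : int => z%:~R) A.

Definition proj (v : 'cV[R]_2) : pt :=
  if v 1 0 == 0 then None else Some (v 0 0 / v 1 0).

Definition hvec (p : pt) : 'cV[R]_2 :=
  match p with
  | Some x => \col_i (if i == 0 then x else 1)
  | None => \col_i (if i == 0 then 1 else 0)
  end.

Definition mob (A : mat) (p : pt) : pt := proj (rmat A *m hvec p).

Definition fixedpt (A : mat) (p : pt) : Prop := mob A p = p.

Definition attr (A : mat) (p : pt) : Prop :=
  (parabolic A /\ forall q, fixedpt A q <-> q = p) \/
  (exists (v : 'cV[R]_2) (lam : R),
      v != 0 /\ rmat A *m v = lam *: v /\ 1 < `|lam| /\ p = proj v).

Definition rep (A : mat) (p : pt) : Prop :=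
  (parabolic A /\ forall q, fixedpt A q <-> q = p) \/
  (exists (v : 'cV[R]_2) (lam : R),
      v != 0 /\ rmat A *m v = lam *: v /\ `|lam| < 1 /\ p = proj v).

(* Cyclic order of P^1(R): go along R increasingly, then through oo. *)
Definition le_pt (p q : pt) : bool :=
  match p, q with
  | Some x, Some y => (x <= y)%O
  | _, None => true
  | None, Some _ => false
  end.

(* closed counterclockwise interval [x, y] *)
Definition in_arc (x y z : pt) : bool :=
  if le_pt x y then le_pt x z && le_pt z y else le_pt x z || le_pt z y.

Definition arc_inv (F G : mat) (x y : pt) : Prop :=
  forall z, in_arc x y z -> in_arc x y (mob F z) /\ in_arc x y (mob G z).

Definition I_exists (P Q : pt -> Prop) (F G : mat) : Prop :=
  exists x y, P x /\ Q y /\ (x = y \/ arc_inv F G x y \/ arc_inv F G y x).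

Definition coherently_oriented (A B : mat) : Prop :=
  I_exists (attr A) (attr B) A B /\
  I_exists (rep A) (rep B) (invmx A) (invmx B).

Definition well_oriented (A B : mat) : Prop :=
  coherently_oriented A B /\ ~ coherently_oriented A (invmx B).

(* Main.v *)
Require Import Defs.
From HB Require Import structures.
From mathcomp Require Import all_boot all_order all_algebra.
From Stdlib Require Import Reals.
From mathcomp Require Import Rstruct.
From mathcomp Require Import ring lra zify.
Import Order.TTheory GRing.Theory Num.Theory.
Local Open Scope ring_scope.
Bind Scope ring_scope with R.
Lemma sum2 (T : nmodType) (F : 'I_2 -> T) : \sum_(i < 2) F i = F 0 + F 1.
Proof. rewrite !big_ord_recl big_ord0 addr0; congr (F _ + F _); exact/val_inj. Qed.

Lemma det2 (T : comRingType) (A : 'M[T]_2) : \det A = A 0 0 * A 1 1 - A 0 1 * A 1 0.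
Proof.
rewrite (expand_det_row _ 0) sum2 /cofactor !det_mx11 !mxE /=.
rewrite expr0 expr1 !mul1r.
have -> : lift 0 0 = 1 :> 'I_2 by apply/val_inj.
have -> : lift 1 0 = 0 :> 'I_2 by apply/val_inj.
ring.
Qed.

Lemma tr2 (T : comRingType) (A : 'M[T]_2) : \tr A = A 0 0 + A 1 1.
Proof. by rewrite /mxtrace sum2. Qed.

Lemma mul2 (T : comRingType) (A B : 'M[T]_2) i j : (A *m B) i j = A i 0 * B 0 j + A i 1 * B 1 j.
Proof. by rewrite mxE sum2. Qed.

Ltac by_det h K := match goal with |- ?L = ?Rr => match type of h with ?d = 1 =>
  have ->: L = Rr + (d - 1) * K by rewrite ?tr2 ?mul2; ring end end; by rewrite h subrr mul0r addr0.

Lemma ord2P (P : 'I_2 -> Prop) : P 0 -> P 1 -> forall i, P i.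
Proof.
move=> h0 h1 [[|[|//]] Hi].
- by have -> : Ordinal Hi = 0 by apply/val_inj.
- by have -> : Ordinal Hi = 1 by apply/val_inj.
Qed.

Lemma id2 (T : comRingType) : (1%:M : 'M[T]_2) 0 0 = 1 /\ (1%:M : 'M[T]_2) 0 1 = 0 /\
  (1%:M : 'M[T]_2) 1 0 = 0 /\ (1%:M : 'M[T]_2) 1 1 = 1.
Proof. by rewrite !mxE. Qed.

Definition rphi (A B : 'M[R]_2) (w : word) : 'M[R]_2 :=
  foldr (fun l M => (if l then A else B) *m M) 1%:M w.

Lemma rphi_cat A B s1 s2 : rphi A B (s1 ++ s2) = rphi A B s1 *m rphi A B s2.
Proof. elim: s1 => [|l s IH] /=; first by rewrite mul1mx. by rewrite IH mulmxA. Qed.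

Fixpoint tv (x y z : R) (w : word) : R * R * R * R :=
  match w with
  | [::] => (2, x, y, z)
  | l :: w' => let: (t0, tA, tB, tAB) := tv x y z w' in
     if l then (tA, x*tA - t0, x*tB + y*tA + (z - x*y)*t0 - tAB, z*tA - y*t0 + tB)
     else (tB, tAB, y*tB - t0, y*tAB - tA)
  end.

Lemma tv_spec (A B : 'M[R]_2) w : \det A = 1 -> \det B = 1 ->
  tv (\tr A) (\tr B) (\tr (A *m B)) w =
  (\tr (rphi A B w), \tr (A *m rphi A B w), \tr (B *m rphi A B w), \tr (A *m B *m rphi A B w)).
Proof.
move=> dA dB; move: (dA) (dB); rewrite !det2 => dA' dB'.
elim: w => [|l w IH] /=.
  by rewrite !mulmx1 mxtrace1.
rewrite IH; set W := rphi A B w; clearbody W.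
case: l.
- congr (_, _, _, _).
  + by_det dA' (\tr W).
  + rewrite !tr2 !mul2; ring.
  + by_det dA' (\tr B * \tr W - \tr (B *m W)).
- congr (_, _, _, _).
  + by rewrite mulmxA.
  + by_det dB' (\tr W).
  + by_det dB' (\tr (A *m W)).
Qed.

Definition mk2 (a b c d : R) : 'M[R]_2 :=
  \matrix_(i < 2, j < 2) if i == 0 then (if j == 0 then a else b) else (if j == 0 then c else d).

Lemma mk2E a b c d : mk2 a b c d 0 0 = a /\ mk2 a b c d 0 1 = b /\
  mk2 a b c d 1 0 = c /\ mk2 a b c d 1 1 = d.
Proof. by rewrite !mxE. Qed.

Definition nn (M : 'M[R]_2) := 0 <= M 0 0 /\ 0 <= M 0 1 /\ 0 <= M 1 0 /\ 0 <= M 1 1.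

Lemma nnD M N : nn M -> nn N -> nn (M + N).
Proof. move=> [h1 [h2 [h3 h4]]] [k1 [k2 [k3 k4]]]; rewrite /nn !mxE; split; [|split; [|split]]; lra. Qed.

Lemma nnM M N : nn M -> nn N -> nn (M *m N).
Proof.
move=> [h1 [h2 [h3 h4]]] [k1 [k2 [k3 k4]]]; rewrite /nn !mul2.
split; [|split; [|split]]; apply: addr_ge0; exact: mulr_ge0.
Qed.

Lemma nn1 : nn 1%:M.
Proof. have [a [b [c d]]] := id2 R; rewrite /nn a b c d; lra. Qed.

Lemma nn_tr M : nn M -> 0 <= \tr M.
Proof. move=> [h1 [h2 [h3 h4]]]; rewrite tr2; lra. Qed.

Lemma subE (M N : 'M[R]_2) i j : (M - N) i j = M i j - N i j.
Proof. by rewrite !mxE. Qed.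

Lemma addE (M N : 'M[R]_2) i j : (M + N) i j = M i j + N i j.
Proof. by rewrite !mxE. Qed.

Lemma oppE (M : 'M[R]_2) i j : (- M) i j = - M i j.
Proof. by rewrite !mxE. Qed.

Lemma step_id (X M : 'M[R]_2) :
  X *m M - 1%:M = (X - 1%:M) + (M - 1%:M) + (X - 1%:M) *m (M - 1%:M).
Proof.
have [a [b [c d]]] := id2 R.
apply/matrixP; apply: ord2P; apply: ord2P; rewrite !(subE, addE, oppE, mul2) ?a ?b ?c ?d; ring.
Qed.

Lemma step_entry (X M : 'M[R]_2) i j : (X *m M - 1%:M) i j =
  (X - 1%:M) i j + (M - 1%:M) i j + ((X - 1%:M) *m (M - 1%:M)) i j.
Proof. by rewrite step_id !mxE. Qed.

Lemma nn_step X M : nn (X - 1%:M) -> nn (M - 1%:M) -> nn (X *m M - 1%:M).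
Proof. move=> h1 h2; rewrite step_id; apply: nnD; [exact: nnD|exact: nnM]. Qed.

Lemma nn_ge1 M : nn (M - 1%:M) -> nn M.
Proof. move=> h; have -> : M = (M - 1%:M) + 1%:M by rewrite subrK. by apply: nnD => //; exact: nn1. Qed.

Section Model.
Variables (p q rho : R).
Hypotheses (hp : 0 <= p) (hq : 0 < q) (hrho : 0 < rho).

Definition P0 := mk2 p rho (p / rho) 0.
Definition Q0 := mk2 0 q 1 q.
Definition A0 := P0 + 1%:M.
Definition B0 := Q0 + 1%:M.

Lemma nnP0 : nn P0.
Proof. have hp0 := hp; have hq0 := hq; have hr0 := hrho.
have [a [b [c d]]] := mk2E p rho (p/rho) 0; rewrite /nn /P0 a b c d; clear a b c d.
split; [lra|split; [lra|split; [|lra]]]. apply: divr_ge0; lra.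
Qed.

Lemma nnQ0 : nn Q0.
Proof. have hp0 := hp; have hq0 := hq; have hr0 := hrho. have [a [b [c d]]] := mk2E 0 q 1 q; rewrite /nn /Q0 a b c d; clear a b c d; lra. Qed.

Lemma A0E : A0 - 1%:M = P0. Proof. have hp0 := hp; have hq0 := hq; have hr0 := hrho. by rewrite /A0 addrK. Qed.
Lemma B0E : B0 - 1%:M = Q0. Proof. have hp0 := hp; have hq0 := hq; have hr0 := hrho. by rewrite /B0 addrK. Qed.

Lemma letter_nn (l : letter) : nn ((if l then A0 else B0) - 1%:M).
Proof. have hp0 := hp; have hq0 := hq; have hr0 := hrho. case: l; [rewrite A0E; exact: nnP0 | rewrite B0E; exact: nnQ0]. Qed.

Lemma N_nn w : nn (rphi A0 B0 w - 1%:M).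
Proof. have hp0 := hp; have hq0 := hq; have hr0 := hrho.
elim: w => [|l w IH] /=; first by rewrite subrr /nn !mxE; lra.
apply: nn_step => //; exact: letter_nn.
Qed.

Lemma N_b w : lb \in w -> 1 <= (rphi A0 B0 w - 1%:M) 1 0.
Proof. have hp0 := hp; have hq0 := hq; have hr0 := hrho.
elim: w => [|l w IH] //; rewrite inE => hb.
have -> : rphi A0 B0 (l :: w) = (if l then A0 else B0) *m rphi A0 B0 w by [].
rewrite step_entry.
have [a1 [a2 [a3 a4]]] := N_nn w.
have [c1 [c2 [c3 c4]]] := @nnM _ _ (letter_nn l) (N_nn w).
have [b1 [b2 [b3 b4]]] := letter_nn l.
clear a1 a2 a4 c1 c2 c4 b1 b2 b4; move: b3 c3 hb; case: l => hb3 hc3 hb /=.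
- have := IH hb; lra.
- move: hb3 hc3; rewrite B0E /Q0; have [_ [_ [-> _]]] := mk2E 0 q 1 q.
  lra.
Qed.

Lemma trP0 M : nn (M - 1%:M) -> p + rho * (M - 1%:M) 1 0 <= \tr (P0 *m M).
Proof. have hp0 := hp; have hq0 := hq; have hr0 := hrho.
move=> [h1 [h2 [h3 h4]]]; rewrite !subE in h1 h2 h3 h4 *.
have [a [b [c d]]] := id2 R; rewrite a b c d in h1 h2 h3 h4 *.
have [e1 [e2 [e3 e4]]] := mk2E p rho (p/rho) 0.
rewrite tr2 !mul2 /P0 e1 e2 e3 e4.
have hpr : 0 <= p / rho by apply: divr_ge0; lra.
have t1 := mulr_ge0 hp0 h1; have t2 := mulr_ge0 hpr h2.
nra.
Qed.

Lemma trQ0 M : nn (M - 1%:M) -> q <= \tr (Q0 *m M).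
Proof. have hp0 := hp; have hq0 := hq; have hr0 := hrho.
move=> [h1 [h2 [h3 h4]]]; rewrite !subE in h1 h2 h3 h4 *.
have [a [b [c d]]] := id2 R; rewrite a b c d in h1 h2 h3 h4 *.
have [e1 [e2 [e3 e4]]] := mk2E 0 q 1 q.
rewrite tr2 !mul2 /Q0 e1 e2 e3 e4.
nra.
Qed.

Lemma mono u w : subseq u w -> nn (rphi A0 B0 w - rphi A0 B0 u).
Proof. have hp0 := hp; have hq0 := hq; have hr0 := hrho.
elim: w u => [|y w IH] u.
  by rewrite subseq0 => /eqP ->; rewrite subrr /nn !mxE; lra.
case: u => [|x u] /=.
  move=> _; have := N_nn (y :: w); done.
case: ifP => [/eqP <- hs|_ hs].
- rewrite -mulmxBr; apply: nnM; last exact: IH.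
  by apply: nn_ge1; exact: letter_nn.
- have -> : (if y then A0 else B0) *m rphi A0 B0 w - rphi A0 B0 (x :: u) =
     ((if y then A0 else B0) - 1%:M) *m rphi A0 B0 w + (rphi A0 B0 w - rphi A0 B0 (x :: u)).
    by rewrite mulmxBl mul1mx addrA subrK.
  apply: nnD; last exact: IH.
  apply: nnM; first exact: letter_nn.
  apply: nn_ge1; exact: N_nn.
Qed.

End Model.

Lemma decomp (u w : word) : subseq u w -> u != w ->
  exists w1 x w2, w = w1 ++ x :: w2 /\ subseq u (w1 ++ w2).
Proof.
elim: w u => [|y w IH] u.
  by rewrite subseq0 => /eqP ->.
case: u => [|x u] /=.
  by move=> _ _; exists [::], y, w; split => //; exact: sub0seq.
case: ifP => [/eqP exy hs neq|_ hs _].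
- subst x. have neq' : u != w by apply: contraNneq neq => ->.
  have [w1 [z [w2 [e h]]]] := IH u hs neq'.
  exists (y :: w1), z, w2; split; first by rewrite e.
  by rewrite /= eqxx.
- by exists [::], y, w.
Qed.

Lemma strict (p q rho : R) (hp : 0 <= p) (hq : 0 < q) (hrho : 0 < rho) (u w : word) :
  subseq u w -> u != w -> (0 < p \/ lb \in w) ->
  \tr (rphi (A0 p rho) (B0 q) u) < \tr (rphi (A0 p rho) (B0 q) w).
Proof.
move=> hs hne hpb.
have [w1 [x [w2 [e hs2]]]] := @decomp _ _ hs hne.
set A' := A0 p rho; set B' := B0 q.
have h1 : \tr (rphi A' B' u) <= \tr (rphi A' B' (w1 ++ w2)).
  have := @nn_tr _ (@mono _ _ _ hp hq hrho _ _ hs2); rewrite !tr2 !subE; lra.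
set X := if x then A' else B'.
set M := rphi A' B' w2; set Z := rphi A' B' w1.
have e2 : \tr (rphi A' B' w) = \tr (rphi A' B' (w1 ++ w2)) + \tr ((X - 1%:M) *m rphi A' B' (w2 ++ w1)).
  rewrite e !rphi_cat /= -/X -/M -/Z.
  have -> : Z *m (X *m M) = Z *m ((X - 1%:M) *m M) + Z *m M.
    by rewrite mulmxBl mul1mx mulmxBr subrK.
  rewrite mxtraceD [in RHS]addrC; congr (_ + _); by rewrite mxtrace_mulC mulmxA.
have hN := @N_nn _ _ _ hp hq hrho (w2 ++ w1).
suff : 0 < \tr ((X - 1%:M) *m rphi A' B' (w2 ++ w1)) by rewrite e2; lra.
clear e2 h1; rewrite /X; clear X; case: x e => e.
- rewrite (@A0E _ _ _ hp hq hrho); have := @trP0 _ _ _ hp hq hrho _ hN.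
  case: hpb => [hp'|hb].
  + have [_ [_ [h3 _]]] := hN.
    have := mulr_ge0 (ltW hrho) h3; lra.
  + have hb' : lb \in w2 ++ w1.
      by move: hb; rewrite e !mem_cat inE /lb /=; case: (false \in w1); case: (false \in w2).
    have := @N_b _ _ _ hp hq hrho _ hb'.
    move=> h3; have := ler_wpM2l (ltW hrho) h3; rewrite mulr1; lra.
- rewrite (@B0E _ _ _ hp hq hrho); have := @trQ0 _ _ _ hp hq hrho _ hN; lra.
Qed.

Lemma rmatM (X Y : mat) : rmat (X *m Y) = rmat X *m rmat Y.
Proof. exact: map_mxM. Qed.

Lemma rmat_phi (A B : mat) w : rmat (phi A B w) = rphi (rmat A) (rmat B) w.
Proof.
elim: w => [|l w IH] /=; first by rewrite /rmat map_mx1.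
by rewrite rmatM IH; case: l.
Qed.

Lemma trw_rphi (A B : mat) w : (trw A B w)%:~R = \tr (rphi (rmat A) (rmat B) w).
Proof. by rewrite -rmat_phi /rmat trace_map_mx. Qed.

Lemma rmat_det (A : mat) : \det A = 1 -> \det (rmat A) = 1.
Proof. by move=> h; rewrite /rmat det_map_mx h rmorph1. Qed.

Lemma rmat_tr (A : mat) : \tr (rmat A) = (\tr A)%:~R.
Proof. by rewrite /rmat trace_map_mx. Qed.

Lemma back_end (A B : mat) (p q r rho : R) :
  \det A = 1 -> \det B = 1 ->
  (\tr A)%:~R = 2 + p -> (\tr B)%:~R = 2 + q -> (\tr (A *m B))%:~R = 2 + p + q + r ->
  0 <= p -> 0 < q -> 0 < rho -> rho * rho - r * rho + p * q = 0 ->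
  forall u w, subseq u w -> u != w -> (0 < p \/ lb \in w) -> trw A B u < trw A B w.
Proof.
move=> dA dB tA tB tAB hp hq hrho hrho2 u w hs hne hpb.
have rho0 : rho != 0 by rewrite gt_eqF.
have hr : r = rho + p * q / rho.
  apply: (mulIf rho0); rewrite mulrDl mulfVK //; lra.
have [e1 [e2 [e3 e4]]] := mk2E p rho (p/rho) 0.
have [f1 [f2 [f3 f4]]] := mk2E 0 q 1 q.
have [i1 [i2 [i3 i4]]] := id2 R.
have dA0 : \det (A0 p rho) = 1.
  rewrite det2 /A0 !addE /P0 e1 e2 e3 e4 i1 i2 i3 i4; field => //.
have dB0 : \det (B0 q) = 1.
  rewrite det2 /B0 !addE /Q0 f1 f2 f3 f4 i1 i2 i3 i4; ring.
have trA : \tr (rmat A) = \tr (A0 p rho).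
  by rewrite rmat_tr tA tr2 /A0 !addE /P0 e1 e4 i1 i4; ring.
have trB : \tr (rmat B) = \tr (B0 q).
  by rewrite rmat_tr tB tr2 /B0 !addE /Q0 f1 f4 i1 i4; ring.
have trAB : \tr (rmat A *m rmat B) = \tr (A0 p rho *m B0 q).
  rewrite -rmatM rmat_tr tAB tr2 !mul2 /A0 /B0 !addE /P0 /Q0 e1 e2 e3 e4 f1 f2 f3 f4 i1 i2 i3 i4 hr.
  field => //.
have key : forall v, (trw A B v)%:~R = \tr (rphi (A0 p rho) (B0 q) v).
  move=> v; rewrite trw_rphi.
  have := tv_spec (rmat A) (rmat B) v (rmat_det _ dA) (rmat_det _ dB).
  have := tv_spec (A0 p rho) (B0 q) v dA0 dB0.
  rewrite trA trB trAB => -> [] //.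
rewrite -(ltr_int R) !key.
exact: strict.
Qed.

Definition Dt (u v : 'cV[R]_2) : R := u 0 0 * v 1 0 - u 1 0 * v 0 0.
Definition Or (u w v : 'cV[R]_2) : R := Dt u w * Dt w v * Dt v u.

Lemma hvecS (a : R) : hvec (Some a) 0 0 = a /\ hvec (Some a) 1 0 = 1.
Proof. by rewrite !mxE. Qed.
Lemma hvecN : hvec None 0 0 = 1 /\ hvec None 1 0 = 0.
Proof. by rewrite !mxE. Qed.

Lemma in_arcE (x y z : pt) : x != y ->
  in_arc x y z = (0 <= Or (hvec x) (hvec z) (hvec y)).
Proof.
rewrite /in_arc /Or /Dt.
have [n1 n2] := hvecN.
case: x => [a|]; case: y => [b|]; case: z => [c|] //= hne;
  rewrite ?n1 ?n2; try (have [s1 s2] := hvecS a; rewrite s1 s2; clear s1 s2);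
  try (have [s1 s2] := hvecS b; rewrite s1 s2; clear s1 s2);
  try (have [s1 s2] := hvecS c; rewrite s1 s2; clear s1 s2).
- have hab : a != b by apply: contraNneq hne => ->.
  case: (ltrgtP a b) hab => // hab _.
  + rewrite pmulr_lge0; last lra.
    apply/andP/idP => [[h1 h2]|h]; first nra.
    split; rewrite real_leNgt ?num_real //; apply/negP => h'; nra.
  + rewrite nmulr_lge0; last lra.
    apply/orP/idP => [[h|h]|h]; first nra; first nra.
    case: (lerP a c) => h1; first by left.
    right; rewrite real_leNgt ?num_real //; apply/negP => h'; nra.
- have hab : a != b by apply: contraNneq hne => ->.
  case: (ltrgtP a b) hab => // hab _.
  + apply/esym/negbTE; rewrite -ltNge; lra.
  + apply/esym; lra.
- rewrite andbT; apply/idP/idP => h; lra.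
- apply/esym; lra.
- apply/idP/idP => h; lra.
- apply/esym; lra.
Qed.

Lemma colP2 (u v : 'cV[R]_2) : u 0 0 = v 0 0 -> u 1 0 = v 1 0 -> u = v.
Proof. move=> h0 h1; apply/matrixP => i j; rewrite (ord1 j); move: i; exact: ord2P. Qed.

Lemma nz2 (v : 'cV[R]_2) : v != 0 -> v 0 0 != 0 \/ v 1 0 != 0.
Proof.
move=> hv; case: (eqVneq (v 0 0) 0) => h0; last by left.
case: (eqVneq (v 1 0) 0) => h1; last by right.
have hv0 : v = 0 by apply: colP2; rewrite ?h0 ?h1 mxE.
by rewrite hv0 eqxx in hv.
Qed.

Lemma scE (c : R) (v : 'cV[R]_2) i j : (c *: v) i j = c * v i j.
Proof. by rewrite mxE. Qed.

Lemma cadd (u v : 'cV[R]_2) i j : (u + v) i j = u i j + v i j.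
Proof. by rewrite mxE. Qed.

Lemma mulcv (M : 'M[R]_2) (v : 'cV[R]_2) i : (M *m v) i 0 = M i 0 * v 0 0 + M i 1 * v 1 0.
Proof. by rewrite mxE sum2. Qed.

Lemma hvec_proj (v : 'cV[R]_2) : v != 0 -> exists c, c != 0 /\ hvec (proj v) = c *: v.
Proof.
move=> hv; rewrite /proj; have [n1 n2] := hvecN.
case: (eqVneq (v 1 0) 0) => h1.
- have h0 : v 0 0 != 0 by case: (@nz2 v hv) => //; rewrite h1 eqxx.
  exists (v 0 0)^-1; split; first by rewrite invr_eq0.
  by apply: colP2; rewrite scE ?n1 ?n2 ?h1 ?mulr0 ?mulVf.
- exists (v 1 0)^-1; split; first by rewrite invr_eq0.
  have [s1 s2] := hvecS (v 0 0 / v 1 0).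
  by apply: colP2; rewrite scE ?s1 ?s2 ?mulVf // mulrC.
Qed.

Lemma proj_hvec p : proj (hvec p) = p.
Proof.
rewrite /proj; case: p => [a|]; have [n1 n2] := hvecN.
- have [s1 s2] := hvecS a; by rewrite s2 oner_eq0 s1 divr1.
- by rewrite n2 eqxx.
Qed.

Lemma hvec_nz p : hvec p != 0.
Proof.
apply/negP => /eqP h; case: p h => [a|] h.
- have [_ s2] := hvecS a; move: s2; rewrite h mxE => /eqP; rewrite eq_sym oner_eq0.
  done.
- have [n1 _] := hvecN; move: n1; rewrite h mxE => /eqP; rewrite eq_sym oner_eq0. done.
Qed.

Lemma unit_rmat (F : mat) : \det F = 1 -> rmat F \in unitmx.
Proof. by move=> h; rewrite unitmxE rmat_det // unitr1. Qed.

Lemma mulmx_nz (M : 'M[R]_2) (v : 'cV[R]_2) : M \in unitmx -> v != 0 -> M *m v != 0.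
Proof. move=> hM; apply: contraNneq => h; by rewrite -(mulKmx hM v) h mulmx0. Qed.

Lemma mob_hvec (F : mat) z : \det F = 1 ->
  exists c, c != 0 /\ hvec (mob F z) = c *: (rmat F *m hvec z).
Proof.
move=> h; rewrite /mob; apply: hvec_proj; apply: mulmx_nz; first exact: unit_rmat.
exact: hvec_nz.
Qed.

Lemma DtZl c u v : Dt (c *: u) v = c * Dt u v.
Proof. rewrite /Dt !scE; ring. Qed.
Lemma DtZr c u v : Dt u (c *: v) = c * Dt u v.
Proof. rewrite /Dt !scE; ring. Qed.
Lemma OrZm c u w v : Or u (c *: w) v = c ^+ 2 * Or u w v.
Proof. rewrite /Or DtZl DtZr; ring. Qed.
Lemma Or_swap u w v : Or u w v = - Or v w u.
Proof. rewrite /Or /Dt; ring. Qed.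

Definition pres (M : 'M[R]_2) (u v : 'cV[R]_2) :=
  forall w, 0 <= Or u w v -> 0 <= Or u (M *m w) v.

Lemma arc_inv_pres (F G : mat) x y : \det F = 1 -> \det G = 1 -> x != y ->
  pres (rmat F) (hvec x) (hvec y) -> pres (rmat G) (hvec x) (hvec y) -> arc_inv F G x y.
Proof.
move=> dF dG hxy pF pG z; rewrite !in_arcE // => h; split.
- have [c [_ ->]] := @mob_hvec F z dF; rewrite OrZm; apply: mulr_ge0; first exact: sqr_ge0.
  exact: pF.
- have [c [_ ->]] := @mob_hvec G z dG; rewrite OrZm; apply: mulr_ge0; first exact: sqr_ge0.
  exact: pG.
Qed.

Definition good (M : 'M[R]_2) (e : 'cV[R]_2) (c : 'cV[R]_2 -> R) :=
  forall h, (c h <= 0 -> pres M e h) /\ (0 <= c h -> pres M h e).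

Lemma decomp2 (e e' w : 'cV[R]_2) : Dt e e' *: w = Dt w e' *: e + Dt e w *: e'.
Proof. apply: colP2; rewrite !(cadd, scE) /Dt; ring. Qed.

Lemma good_hyp (M : 'M[R]_2) e e' l l' : M *m e = l *: e -> M *m e' = l' *: e' ->
  0 <= l' -> l' <= l -> Dt e e' != 0 -> good M e (fun h => Or e e' h).
Proof.
move=> he he' hl' hll hE.
have key : forall w h, Or e (M *m w) h * (Dt e e') ^+ 2 =
   l * l' * Or e w h * (Dt e e') ^+ 2 - l' * (l - l') * (Dt e w) ^+ 2 * Or e e' h.
  move=> w h.
  have : Dt e e' *: (M *m w) = (Dt w e' * l) *: e + (Dt e w * l') *: e'.
    by rewrite scalemxAr decomp2 mulmxDr -!scalemxAr he he' !scalerA.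
  move=> /(congr1 (fun v => Or e v h)); rewrite OrZm mulrC => ->.
  rewrite /Or /Dt !(cadd, scE); ring.
have hE2 : 0 < (Dt e e') ^+ 2 by rewrite exprn_even_gt0.
move=> h; split => hc w hw.
- have := key w h.
  have t1 : 0 <= l * l' * Or e w h * (Dt e e') ^+ 2.
    apply: mulr_ge0; last exact: sqr_ge0. apply: mulr_ge0; last lra. apply: mulr_ge0; lra.
  have t2 : 0 <= l' * (l - l') * (Dt e w) ^+ 2 * (- Or e e' h).
    apply: mulr_ge0; last lra. apply: mulr_ge0; last exact: sqr_ge0.
    apply: mulr_ge0; lra.
  move=> k.
  have : 0 <= Or e (M *m w) h * (Dt e e') ^+ 2 by rewrite k; nra.
  by rewrite pmulr_lge0.
- rewrite Or_swap oppr_ge0 in hw.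
  have := key w h.
  have t1 : l * l' * (- Or e w h) * (Dt e e') ^+ 2 >= 0.
    apply: mulr_ge0; last exact: sqr_ge0. apply: mulr_ge0; last lra. apply: mulr_ge0; lra.
  have t2 : 0 <= l' * (l - l') * (Dt e w) ^+ 2 * Or e e' h.
    apply: mulr_ge0 => //. apply: mulr_ge0; last exact: sqr_ge0.
    apply: mulr_ge0; lra.
  move=> k.
  have hh : 0 <= (- Or e (M *m w) h) * (Dt e e') ^+ 2 by rewrite mulNr k; nra.
  rewrite pmulr_lge0 // in hh; rewrite Or_swap; exact: hh.
Qed.

Lemma good_par (M : 'M[R]_2) e (k : R) :
  (forall w, M *m w = w + (k * Dt e w) *: e) -> good M e (fun _ => k).
Proof.
move=> hM.
have key : forall w h, Or e (M *m w) h = Or e w h - k * (Dt e w * Dt e h) ^+ 2.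
  move=> w h; rewrite hM /Or /Dt !(cadd, scE); ring.
move=> h; split => hc w hw.
- rewrite key; have := sqr_ge0 (Dt e w * Dt e h); nra.
- rewrite Or_swap key; have := sqr_ge0 (Dt e w * Dt e h).
  move: hw; rewrite Or_swap => hw; nra.
Qed.

Lemma arcs (F G : mat) x y cF cG :
  good (rmat F) (hvec x) cF -> good (rmat G) (hvec y) cG ->
  \det F = 1 -> \det G = 1 -> cF (hvec y) * cG (hvec x) <= 0 ->
  x = y \/ arc_inv F G x y \/ arc_inv F G y x.
Proof.
move=> gF gG dF dG hp.
case: (eqVneq x y) => hxy; first by left.
right.
have [a1 a2] := gF (hvec y); have [b1 b2] := gG (hvec x).
have : (cF (hvec y) <= 0 /\ 0 <= cG (hvec x)) \/ (0 <= cF (hvec y) /\ cG (hvec x) <= 0).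
  case: (lerP (cF (hvec y)) 0) => h1; case: (lerP 0 (cG (hvec x))) => h2.
  - by left.
  - right; split => //; last lra. nra.
  - by right; split; [lra|nra].
  - right; split; lra.
case=> [[h1 h2]|[h1 h2]].
- left; apply: arc_inv_pres => //; [exact: a1|exact: b2].
- right; apply: arc_inv_pres => //; first by rewrite eq_sym.
  + exact: a2.
  + exact: b1.
Qed.

Set Implicit Arguments. Unset Strict Implicit.
Arguments nz2 {v}. Arguments hvec_proj {v}. Arguments mulmx_nz {M v}.

Lemma charpoly (M : 'M[R]_2) (v : 'cV[R]_2) l : v != 0 -> M *m v = l *: v ->
  l ^+ 2 - \tr M * l + \det M = 0.
Proof.
move=> hv he.
have e0 : M 0 0 * v 0 0 + M 0 1 * v 1 0 = l * v 0 0 by rewrite -mulcv he scE.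
have e1 : M 1 0 * v 0 0 + M 1 1 * v 1 0 = l * v 1 0 by rewrite -mulcv he scE.
rewrite tr2 det2.
set c := _ + _.
have h0 : c * v 0 0 = 0.
  have -> : c * v 0 0 = (M 1 1 - l) * (M 0 0 * v 0 0 + M 0 1 * v 1 0 - l * v 0 0)
        - M 0 1 * (M 1 0 * v 0 0 + M 1 1 * v 1 0 - l * v 1 0) by rewrite /c; ring.
  by rewrite e0 e1 !subrr !mulr0 subrr.
have h1 : c * v 1 0 = 0.
  have -> : c * v 1 0 = (M 0 0 - l) * (M 1 0 * v 0 0 + M 1 1 * v 1 0 - l * v 1 0)
        - M 1 0 * (M 0 0 * v 0 0 + M 0 1 * v 1 0 - l * v 0 0) by rewrite /c; ring.
  by rewrite e0 e1 !subrr !mulr0 subrr.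
case: (nz2 hv) => hz.
- by move/eqP: h0; rewrite mulf_eq0 (negbTE hz) orbF => /eqP.
- by move/eqP: h1; rewrite mulf_eq0 (negbTE hz) orbF => /eqP.
Qed.

Lemma eig_scale (M : 'M[R]_2) (v : 'cV[R]_2) l c : M *m v = l *: v -> M *m (c *: v) = l *: (c *: v).
Proof. by move=> h; rewrite -scalemxAr h !scalerA mulrC. Qed.

Lemma attr_hyp (A : mat) x : \det A = 1 -> 2 < (\tr A)%:~R :> R -> attr A x ->
  exists l : R, rmat A *m hvec x = l *: hvec x /\ 1 < l.
Proof.
move=> dA tA [[hp _]|[v [l [hv [he [hl ->]]]]]].
  by move: tA; rewrite /parabolic in hp; rewrite hp; lra.
have [c [_ ->]] := hvec_proj hv.
exists l; split; first exact: eig_scale.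
have := charpoly hv he; rewrite rmat_det // rmat_tr => hc.
have : 0 < l by nra.
move=> lp; move: hl; rewrite ger0_norm //; lra.
Qed.

Lemma rep_hyp (A : mat) x : \det A = 1 -> 2 < (\tr A)%:~R :> R -> rep A x ->
  exists l : R, rmat A *m hvec x = l *: hvec x /\ 0 < l /\ l < 1.
Proof.
move=> dA tA [[hp _]|[v [l [hv [he [hl ->]]]]]].
  by move: tA; rewrite /parabolic in hp; rewrite hp; lra.
have [c [_ ->]] := hvec_proj hv.
exists l; split; first exact: eig_scale.
have := charpoly hv he; rewrite rmat_det // rmat_tr => hc.
have : 0 < l by nra.
move=> lp; move: hl; rewrite ger0_norm //; lra.
Qed.

Lemma Dt_hvec0 x y : Dt (hvec x) (hvec y) = 0 -> x = y.
Proof.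
rewrite /Dt; have [n1 n2] := hvecN.
case: x => [a|]; case: y => [b|]; rewrite ?n1 ?n2;
  try (have [s1 s2] := hvecS a; rewrite s1 s2; clear s1 s2);
  try (have [s1 s2] := hvecS b; rewrite s1 s2; clear s1 s2); move=> h.
- congr Some; lra.
- exfalso; lra.
- exfalso; lra.
- done.
Qed.

Lemma eig_distinct (M : 'M[R]_2) x y a b : M *m hvec x = a *: hvec x -> M *m hvec y = b *: hvec y ->
  a != b -> Dt (hvec x) (hvec y) != 0.
Proof.
move=> ha hb hab; apply/eqP => /Dt_hvec0 exy; subst y.
have : (a - b) *: hvec x = 0 by rewrite scalerBl -ha -hb subrr.
move/eqP; rewrite scaler_eq0 subr_eq0 (negbTE hab) /= => /eqP h.
by have := hvec_nz x; rewrite h eqxx.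
Qed.

Lemma unit_int (F : mat) : \det F = 1 -> F \in unitmx.
Proof. by move=> h; rewrite unitmxE h unitr1. Qed.

Lemma rmat1 : rmat 1%:M = 1%:M.
Proof. by rewrite /rmat map_mx1. Qed.

Lemma rmat_invl (F : mat) : \det F = 1 -> rmat (invmx F) *m rmat F = 1%:M.
Proof. by move=> h; rewrite -rmatM mulVmx ?rmat1 // unit_int. Qed.

Lemma rmat_invr (F : mat) : \det F = 1 -> rmat F *m rmat (invmx F) = 1%:M.
Proof. by move=> h; rewrite -rmatM mulmxV ?rmat1 // unit_int. Qed.

Lemma det_inv1 (F : mat) : \det F = 1 -> \det (invmx F) = 1.
Proof. by move=> h; rewrite det_inv h invr1. Qed.

Lemma eig_inv (F : mat) (v : 'cV[R]_2) l : \det F = 1 -> rmat F *m v = l *: v -> l != 0 ->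
  rmat (invmx F) *m v = l^-1 *: v.
Proof.
move=> dF he hl.
have : rmat (invmx F) *m (rmat F *m v) = v by rewrite mulmxA rmat_invl // mul1mx.
rewrite he -scalemxAr => h.
by rewrite -{2}h scalerA mulVf // scale1r.
Qed.

Lemma Dt_addZ e u c : Dt e (u + c *: e) = Dt e u.
Proof. rewrite /Dt !(cadd, scE); ring. Qed.

Lemma par_inv (A : mat) e k : \det A = 1 ->
  (forall w, rmat A *m w = w + (k * Dt e w) *: e) ->
  forall w, rmat (invmx A) *m w = w + ((- k) * Dt e w) *: e.
Proof.
move=> dA hA w.
set w' := rmat (invmx A) *m w.
have hw : rmat A *m w' = w by rewrite /w' mulmxA rmat_invr // mul1mx.
have hw2 : w = w' + (k * Dt e w') *: e by rewrite -hw hA.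
have hD : Dt e w = Dt e w' by rewrite hw2 Dt_addZ.
rewrite hD {1}hw2 -addrA -scalerDl mulNr addrN scale0r addr0 //.
Qed.

Lemma attr_par (A : mat) x : \det A = 1 -> \tr A = 2 -> attr A x ->
  (forall q, fixedpt A q <-> q = x) /\ rmat A *m hvec x = hvec x.
Proof.
move=> dA tA hat.
have ch : forall (v : 'cV[R]_2) l, v != 0 -> rmat A *m v = l *: v -> l = 1.
  move=> v l hv he; have := charpoly hv he; rewrite rmat_det // rmat_tr tA => h.
  have : (l - 1) ^+ 2 = 0 by rewrite -h; ring.
  by move/eqP; rewrite sqrf_eq0 subr_eq0 => /eqP.
case: hat => [[_ hq]|[v [l [hv [he [hl _]]]]]]; last first.
  by move: hl; rewrite (ch _ _ hv he) normr1 ltxx.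
split => //.
have hf : fixedpt A x by rewrite hq.
have [c [hc he]] := @mob_hvec A x dA.
rewrite hf in he.
have he' : rmat A *m hvec x = c^-1 *: hvec x.
  by rewrite {2}he scalerA mulVf // scale1r.
have := ch _ _ (hvec_nz x) he'.
by move=> h1; rewrite he' h1 scale1r.
Qed.

Lemma par_kappa (M : 'M[R]_2) x : \tr M = 2 -> M *m hvec x = hvec x ->
  exists k, forall w, M *m w = w + (k * Dt (hvec x) w) *: hvec x.
Proof.
rewrite tr2 => ht he.
have e0 : (M *m hvec x) 0 0 = hvec x 0 0 by rewrite he.
have e1 : (M *m hvec x) 1 0 = hvec x 1 0 by rewrite he.
rewrite !mulcv in e0 e1.
have [n1 n2] := hvecN.
case: x he e0 e1 => [a|] he; rewrite ?n1 ?n2;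
  try (have [s1 s2] := hvecS a; rewrite s1 s2) => e0 e1.
- exists (- M 1 0) => w; apply: colP2; rewrite mulcv cadd scE /Dt s1 s2.
  + have h00 : M 0 0 = 1 + a * M 1 0 by lra.
    have h01 : M 0 1 = a - M 0 0 * a by lra.
    rewrite h01 h00; ring.
  + idtac.
    have h11 : M 1 1 = 1 - M 1 0 * a by lra.
    rewrite h11; ring.
- exists (M 0 1) => w; apply: colP2; rewrite mulcv cadd scE /Dt n1 n2.
  + have h00 : M 0 0 = 1 by lra.
    rewrite h00; ring.
  + idtac.
    have h10 : M 1 0 = 0 by lra.
    have h11 : M 1 1 = 1 by lra.
    rewrite h10 h11; ring.
Qed.

Lemma eig_entries (M : 'M[R]_2) e e' l l' : M *m e = l *: e -> M *m e' = l' *: e' ->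
  Dt e e' * M 0 0 = l * e 0 0 * e' 1 0 - l' * e' 0 0 * e 1 0 /\
  Dt e e' * M 0 1 = (l' - l) * e 0 0 * e' 0 0 /\
  Dt e e' * M 1 0 = (l - l') * e 1 0 * e' 1 0 /\
  Dt e e' * M 1 1 = l' * e' 1 0 * e 0 0 - l * e 1 0 * e' 0 0.
Proof.
move=> he he'.
have h1 : M 0 0 * e 0 0 + M 0 1 * e 1 0 = l * e 0 0 by rewrite -mulcv he scE.
have h2 : M 1 0 * e 0 0 + M 1 1 * e 1 0 = l * e 1 0 by rewrite -mulcv he scE.
have h3 : M 0 0 * e' 0 0 + M 0 1 * e' 1 0 = l' * e' 0 0 by rewrite -mulcv he' scE.
have h4 : M 1 0 * e' 0 0 + M 1 1 * e' 1 0 = l' * e' 1 0 by rewrite -mulcv he' scE.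
rewrite /Dt; split; [|split; [|split]].
- have -> : (e 0 0 * e' 1 0 - e 1 0 * e' 0 0) * M 0 0 =
     e' 1 0 * (M 0 0 * e 0 0 + M 0 1 * e 1 0) - e 1 0 * (M 0 0 * e' 0 0 + M 0 1 * e' 1 0) by ring.
  rewrite h1 h3; ring.
- have -> : (e 0 0 * e' 1 0 - e 1 0 * e' 0 0) * M 0 1 =
     e 0 0 * (M 0 0 * e' 0 0 + M 0 1 * e' 1 0) - e' 0 0 * (M 0 0 * e 0 0 + M 0 1 * e 1 0) by ring.
  rewrite h1 h3; ring.
- have -> : (e 0 0 * e' 1 0 - e 1 0 * e' 0 0) * M 1 0 =
     e' 1 0 * (M 1 0 * e 0 0 + M 1 1 * e 1 0) - e 1 0 * (M 1 0 * e' 0 0 + M 1 1 * e' 1 0) by ring.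
  rewrite h2 h4; ring.
- have -> : (e 0 0 * e' 1 0 - e 1 0 * e' 0 0) * M 1 1 =
     e 0 0 * (M 1 0 * e' 0 0 + M 1 1 * e' 1 0) - e' 0 0 * (M 1 0 * e 0 0 + M 1 1 * e 1 0) by ring.
  rewrite h2 h4; ring.
Qed.

Lemma z_ident (A B : 'M[R]_2) e e' f f' l l' m m' :
  A *m e = l *: e -> A *m e' = l' *: e' -> B *m f = m *: f -> B *m f' = m' *: f' ->
  \tr (A *m B) * Dt e e' * Dt f f' =
  (l * m + l' * m') * Dt e e' * Dt f f' - (l - l') * (m - m') * Dt e f * Dt e' f'.
Proof.
move=> he he' hf hf'.
have [a1 [a2 [a3 a4]]] := eig_entries he he'.
have [b1 [b2 [b3 b4]]] := eig_entries hf hf'.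
rewrite tr2 !mul2.
have -> : (A 0 0 * B 0 0 + A 0 1 * B 1 0 + (A 1 0 * B 0 1 + A 1 1 * B 1 1)) * Dt e e' * Dt f f' =
  (Dt e e' * A 0 0) * (Dt f f' * B 0 0) + (Dt e e' * A 0 1) * (Dt f f' * B 1 0)
  + (Dt e e' * A 1 0) * (Dt f f' * B 0 1) + (Dt e e' * A 1 1) * (Dt f f' * B 1 1) by ring.
rewrite a1 a2 a3 a4 b1 b2 b3 b4 /Dt; ring.
Qed.

Lemma par_ident (A B : 'M[R]_2) e k f f' m m' :
  (forall w, A *m w = w + (k * Dt e w) *: e) -> B *m f = m *: f -> B *m f' = m' *: f' ->
  (\tr (A *m B) - \tr B) * Dt f f' = - k * Dt f e * Dt e f' * (m - m').
Proof.
move=> hA hf hf'.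
have [b1 [b2 [b3 b4]]] := eig_entries hf hf'.
have [n1 n2] := hvecN; have [s1 s2] := hvecS 0.
have u0 := hA (hvec None); have u1 := hA (hvec (Some 0)).
have c00 : (A *m hvec None) 0 0 = (hvec None + (k * Dt e (hvec None)) *: e) 0 0 by rewrite u0.
have c10 : (A *m hvec None) 1 0 = (hvec None + (k * Dt e (hvec None)) *: e) 1 0 by rewrite u0.
have c01 : (A *m hvec (Some 0)) 0 0 = (hvec (Some 0) + (k * Dt e (hvec (Some 0))) *: e) 0 0 by rewrite u1.
have c11 : (A *m hvec (Some 0)) 1 0 = (hvec (Some 0) + (k * Dt e (hvec (Some 0))) *: e) 1 0 by rewrite u1.
rewrite !mulcv !cadd !scE /Dt n1 n2 s1 s2 in c00 c10 c01 c11.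
have hA00 : A 0 0 = 1 + k * (e 0 0 * 0 - e 1 0 * 1) * e 0 0 by rewrite -c00; ring.
have hA10 : A 1 0 = 0 + k * (e 0 0 * 0 - e 1 0 * 1) * e 1 0 by rewrite -c10; ring.
have hA01 : A 0 1 = 0 + k * (e 0 0 * 1 - e 1 0 * 0) * e 0 0 by rewrite -c01; ring.
have hA11 : A 1 1 = 1 + k * (e 0 0 * 1 - e 1 0 * 0) * e 1 0 by rewrite -c11; ring.
rewrite !tr2 !mul2.
have -> : (A 0 0 * B 0 0 + A 0 1 * B 1 0 + (A 1 0 * B 0 1 + A 1 1 * B 1 1) - (B 0 0 + B 1 1)) * Dt f f' =
  (A 0 0 - 1) * (Dt f f' * B 0 0) + A 0 1 * (Dt f f' * B 1 0)
  + A 1 0 * (Dt f f' * B 0 1) + (A 1 1 - 1) * (Dt f f' * B 1 1) by ring.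
rewrite b1 b2 b3 b4 hA00 hA10 hA01 hA11 /Dt; ring.
Qed.

Lemma vieta (A : mat) x x' l l' : \det A = 1 ->
  rmat A *m hvec x = l *: hvec x -> rmat A *m hvec x' = l' *: hvec x' -> l != l' ->
  l + l' = (\tr A)%:~R /\ l * l' = 1.
Proof.
move=> dA h h'.
have c1 := charpoly (hvec_nz x) h; have c2 := charpoly (hvec_nz x') h'.
rewrite rmat_det // rmat_tr in c1 c2 => hll.
set t := (\tr A)%:~R in c1 c2 *.
have : (l - l') * (l + l' - t) = 0.
  have -> : (l - l') * (l + l' - t) = (l ^+ 2 - t * l + 1) - (l' ^+ 2 - t * l' + 1) by ring.
  by rewrite c1 c2 subrr.
move/eqP; rewrite mulf_eq0 subr_eq0 (negbTE hll) /= subr_eq0 => /eqP hs.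
split => //.
have -> : l' = t - l by rewrite -hs; ring.
have -> : l * (t - l) = - (l ^+ 2 - t * l + 1) + 1 by ring.
by rewrite c1 oppr0 add0r.
Qed.

Lemma normV_gt1 (a : R) : 0 < a -> a < 1 -> 1 < `|a^-1|.
Proof. move=> h0 h1; rewrite ger0_norm ?invr_ge0 ?ltW // invf_gt1 //. Qed.

Lemma normV_lt1 (a : R) : 1 < a -> `|a^-1| < 1.
Proof. move=> h1; rewrite ger0_norm ?invr_ge0; last lra. rewrite invf_lt1 //; lra. Qed.

Lemma front_hyp (A B : mat) : \det A = 1 -> \det B = 1 ->
  2 < (\tr A)%:~R :> R -> 2 < (\tr B)%:~R :> R -> well_oriented A B ->
  0 < (\tr (A *m B))%:~R - (\tr A)%:~R - (\tr B)%:~R + 2 :> R /\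
  4 * ((\tr A)%:~R - 2) * ((\tr B)%:~R - 2) <=
     ((\tr (A *m B))%:~R - (\tr A)%:~R - (\tr B)%:~R + 2) ^+ 2 :> R.
Proof.
move=> dA dB tA tB [[[x1 [y1 [ax [ay _]]]] [x2 [y2 [rx [ry _]]]]] hn].
have [l [hl l1]] := attr_hyp dA tA ax.
have [l' [hl' [l'0 l'1]]] := rep_hyp dA tA rx.
have [m [hm m1]] := attr_hyp dB tB ay.
have [m' [hm' [m'0 m'1]]] := rep_hyp dB tB ry.
have nl : l != l' by rewrite gt_eqF //; lra.
have nm : m != m' by rewrite gt_eqF //; lra.
have [sl pl] := vieta dA hl hl' nl.
have [sm pm] := vieta dB hm hm' nm.
have E0 := eig_distinct hl hl' nl.
have F0 := eig_distinct hm hm' nm.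
set e := hvec x1 in hl E0; set e' := hvec x2 in hl' E0.
set f := hvec y1 in hm F0; set f' := hvec y2 in hm' F0.
set S := Dt e f * Dt e' f' * Dt e e' * Dt f f'.
case: (lerP S 0) => hS.
- have zi := z_ident hl hl' hm hm'.
  rewrite -rmatM rmat_tr in zi.
  set z := (\tr (A *m B))%:~R in zi *.
  set x := (\tr A)%:~R in sl tA *; set y := (\tr B)%:~R in sm tB *.
  have EF : 0 < (Dt e e' * Dt f f') ^+ 2 by rewrite exprn_even_gt0 // mulf_neq0.
  have hz : (z - (l * m + l' * m')) * (Dt e e' * Dt f f') ^+ 2 = - ((l - l') * (m - m')) * S.
    have -> : (z - (l * m + l' * m')) * (Dt e e' * Dt f f') ^+ 2 =
       (z * Dt e e' * Dt f f' - (l * m + l' * m') * Dt e e' * Dt f f') * (Dt e e' * Dt f f') by ring.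
    rewrite zi /S; ring.
  have hz2 : 0 <= z - (l * m + l' * m').
    rewrite -(pmulr_lge0 _ EF) hz; apply: mulr_le0; last exact: hS.
    rewrite oppr_le0; apply: mulr_ge0; lra.
  have r1p : 0 < (l - 1) * (m - 1) + (l' - 1) * (m' - 1) by nra.
  have l0 : l != 0 by rewrite gt_eqF //; lra.
  have m0 : m != 0 by rewrite gt_eqF //; lra.
  have hl'E : l' = l^-1 by apply: (mulfI l0); rewrite pl mulfV.
  have hm'E : m' = m^-1 by apply: (mulfI m0); rewrite pm mulfV.
  have hsq : ((l - 1) * (m - 1) + (l' - 1) * (m' - 1)) ^+ 2 - 4 * (x - 2) * (y - 2)
       = ((l - 1) * (m - 1) * (1 - l' * m')) ^+ 2.
    rewrite -sl -sm hl'E hm'E; field.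
    by rewrite l0 m0.
  have := sqr_ge0 ((l - 1) * (m - 1) * (1 - l' * m')).
  rewrite -hsq => hsq2.
  split; first lra.
  have hr : (l - 1) * (m - 1) + (l' - 1) * (m' - 1) <= z - x - y + 2 by lra.
  nra.
- exfalso; apply: hn; split.
  + exists x1, y2; split => //; split.
      right; exists f', m'^-1; split; first exact: hvec_nz.
      split; first by apply: eig_inv => //; rewrite gt_eqF.
      split; first exact: normV_gt1.
      by rewrite proj_hvec.
    apply: (@arcs A (invmx B) x1 y2 (fun h => Or e e' h) (fun h => Or f' f h)).
    * apply: good_hyp hl hl' _ _ E0; lra.
    * apply: (@good_hyp (rmat (invmx B)) f' f (m'^-1) (m^-1)).
      - by apply: eig_inv => //; rewrite gt_eqF.
      - by apply: eig_inv => //; rewrite gt_eqF //; lra.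
      - rewrite invr_ge0; lra.
      - rewrite lef_pV2 ?posrE; lra.
      - by rewrite /Dt; apply/eqP => h; move/eqP: F0; rewrite /Dt; apply; lra.
    * by [].
    * exact: det_inv1.
    * have -> : Or e e' f' * Or f' f e = - S * (Dt e f') ^+ 2 by rewrite /Or /S /Dt; ring.
      have := sqr_ge0 (Dt e f'); nra.
  + exists x2, y1; split => //; split.
      right; exists f, m^-1; split; first exact: hvec_nz.
      split; first by apply: eig_inv => //; rewrite gt_eqF //; lra.
      split; first exact: normV_lt1.
      by rewrite proj_hvec.
    have dB' : \det (invmx (invmx B)) = 1 by rewrite !det_inv1.
    apply: (@arcs (invmx A) (invmx (invmx B)) x2 y1 (fun h => Or e' e h) (fun h => Or f f' h)).
    * apply: (@good_hyp (rmat (invmx A)) e' e (l'^-1) (l^-1)).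
      - by apply: eig_inv => //; rewrite gt_eqF.
      - by apply: eig_inv => //; rewrite gt_eqF //; lra.
      - rewrite invr_ge0; lra.
      - rewrite lef_pV2 ?posrE; lra.
      - by rewrite /Dt; apply/eqP => h; move/eqP: E0; rewrite /Dt; apply; lra.
    * rewrite invmxK; apply: good_hyp hm hm' _ _ F0; lra.
    * exact: det_inv1.
    * exact: dB'.
    * have -> : Or e' e f * Or f f' e' = - S * (Dt e' f) ^+ 2 by rewrite /Or /S /Dt; ring.
      have := sqr_ge0 (Dt e' f); nra.
Qed.

Lemma front_par (A B : mat) : \det A = 1 -> \det B = 1 -> \tr A = 2 ->
  2 < (\tr B)%:~R :> R -> well_oriented A B ->
  (\tr B)%:~R < (\tr (A *m B))%:~R :> R.
Proof.
move=> dA dB tA tB [[[x1 [y1 [ax [ay _]]]] [x2 [y2 [rx [ry _]]]]] hn].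
have [hq hfix] := attr_par dA tA ax.
have trA : \tr (rmat A) = 2 by rewrite rmat_tr tA.
have [k hk] := par_kappa trA hfix.
have [m [hm m1]] := attr_hyp dB tB ay.
have [m' [hm' [m'0 m'1]]] := rep_hyp dB tB ry.
have nm : m != m' by rewrite gt_eqF //; lra.
have F0 := eig_distinct hm hm' nm.
set e := hvec x1 in hk hfix.
set f := hvec y1 in hm F0; set f' := hvec y2 in hm' F0.
set O := Or f' f e.
have dB' : \det (invmx (invmx B)) = 1 by rewrite !det_inv1.
case: (lerP (k * O) 0) => hkO.
- exfalso; apply: hn; split.
  + exists x1, y2; split => //; split.
      right; exists f', m'^-1; split; first exact: hvec_nz.
      split; first by apply: eig_inv => //; rewrite gt_eqF.
      split; first exact: normV_gt1.
      by rewrite proj_hvec.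
    apply: (@arcs A (invmx B) x1 y2 (fun _ => k) (fun h => Or f' f h)).
    * exact: good_par hk.
    * apply: (@good_hyp (rmat (invmx B)) f' f (m'^-1) (m^-1)).
      - by apply: eig_inv => //; rewrite gt_eqF.
      - by apply: eig_inv => //; rewrite gt_eqF //; lra.
      - rewrite invr_ge0; lra.
      - rewrite lef_pV2 ?posrE; lra.
      - by rewrite /Dt; apply/eqP => h; move/eqP: F0; rewrite /Dt; apply; lra.
    * by [].
    * exact: det_inv1.
    * exact: hkO.
  + exists x1, y1; split.
      by left; split.
    split.
      right; exists f, m^-1; split; first exact: hvec_nz.
      split; first by apply: eig_inv => //; rewrite gt_eqF //; lra.
      split; first exact: normV_lt1.
      by rewrite proj_hvec.
    apply: (@arcs (invmx A) (invmx (invmx B)) x1 y1 (fun _ => - k) (fun h => Or f f' h)).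
    * apply: good_par; exact: par_inv dA hk.
    * rewrite invmxK; apply: good_hyp hm hm' _ _ F0; lra.
    * exact: det_inv1.
    * exact: dB'.
    * have -> : - k * Or f f' e = k * O by rewrite /O /Or /Dt; ring.
      exact: hkO.
- have pi := par_ident hk hm hm'.
  rewrite -rmatM !rmat_tr in pi.
  have F2 : 0 < (Dt f f') ^+ 2 by rewrite exprn_even_gt0.
  have : ((\tr (A *m B))%:~R - (\tr B)%:~R) * (Dt f f') ^+ 2 = k * O * (m - m').
    have -> : ((\tr (A *m B))%:~R - (\tr B)%:~R) * (Dt f f') ^+ 2 =
      (((\tr (A *m B))%:~R - (\tr B)%:~R) * Dt f f') * Dt f f' by ring.
    rewrite pi /O /Or /Dt; ring.
  have : 0 < k * O * (m - m') by apply: mulr_gt0 => //; lra.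
  move=> h1 h2; rewrite -h2 pmulr_lgt0 // in h1; lra.
Qed.

Lemma no_b (w : word) : ~ (exists n : nat, w = nseq n la) -> lb \in w.
Proof.
move=> h; apply/negPn/negP => hb; apply: h; exists (size w).
elim: w hb => [|l w IH] //= hb.
move: hb; rewrite inE negb_or => /andP [h1 h2].
case: l h1 => // _; by rewrite -IH.
Qed.

Lemma sqrt_root (p q r : R) : 0 < r -> 4 * p * q <= r ^+ 2 ->
  exists rho, 0 < rho /\ rho * rho - r * rho + p * q = 0.
Proof.
move=> hr hd.
set s := Num.sqrt (r ^+ 2 - 4 * p * q).
have hs0 : 0 <= s by exact: sqrtr_ge0.
have hs2 : s ^+ 2 = r ^+ 2 - 4 * p * q by rewrite sqr_sqrtr //; lra.
exists ((r + s) / 2); split; first by apply: divr_gt0; lra.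
have -> : (r + s) / 2 * ((r + s) / 2) - r * ((r + s) / 2) + p * q = (s ^+ 2 - (r ^+ 2 - 4 * p * q)) / 4.
  by field.
by rewrite hs2 subrr mul0r.
Qed.

Unset Implicit Arguments.

Theorem lemma5p2 (A B : mat) :
  inSL2Z A -> inSL2Z B -> A *m B <> B *m A ->
  well_oriented A B ->
  2 <= \tr A -> \tr A < \tr B ->
  forall w u : word,
    (trw A B w < trw A B u <-> trw A B w <= trw A B u - 1) /\
    (subword u w ->
       ~ (parabolic A /\ exists n : nat, w = nseq n la) ->
       trw A B u < trw A B w).
Proof.
move=> dA dB _ hwo t2 tlt w u; split; first by lia.
move=> [hs hne] hex.
have h2R : (2 : R) = (2 : int)%:~R by [].
have tB : 2 < (\tr B)%:~R :> R by rewrite {1}h2R ltr_int; lia.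
case: (ltgtP (\tr A) 2) => htA.
- by exfalso; lia.
- have tA : 2 < (\tr A)%:~R :> R by rewrite {1}h2R ltr_int.
  have [hr hd] := front_hyp dA dB tA tB hwo.
  have [rho [hrho hroot]] := sqrt_root hr hd.
  set x := (\tr A)%:~R : R; set y := (\tr B)%:~R : R; set z := (\tr (A *m B))%:~R : R.
  have e1 : x = 2 + (x - 2) by ring.
  have e2 : y = 2 + (y - 2) by ring.
  have e3 : z = 2 + (x - 2) + (y - 2) + (z - x - y + 2) by ring.
  have hp : 0 <= x - 2 by lra.
  have hq : 0 < y - 2 by lra.
  have hroot' : rho * rho - (z - x - y + 2) * rho + (x - 2) * (y - 2) = 0 by [].
  have hpb : 0 < x - 2 \/ lb \in w by left; lra.
  exact: (@back_end A B (x - 2) (y - 2) (z - x - y + 2) rho dA dB e1 e2 e3 hp hq hrho hroot' u w hs hne hpb).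
- have hz := front_par dA dB htA tB hwo.
  set y := (\tr B)%:~R : R; set z := (\tr (A *m B))%:~R : R.
  have e1 : (\tr A)%:~R = 2 + 0 :> R by rewrite htA addr0.
  have e2 : y = 2 + (y - 2) by ring.
  have e3 : z = 2 + 0 + (y - 2) + (z - y) by ring.
  have hp : 0 <= 0 :> R by [].
  have hq : 0 < y - 2 by lra.
  have hrho : 0 < z - y by lra.
  have hroot' : (z - y) * (z - y) - (z - y) * (z - y) + 0 * (y - 2) = 0 by ring.
  have hpb : 0 < 0 :> R \/ lb \in w.
    right; apply: no_b => hn; apply: hex; split => //.
  exact: (@back_end A B 0 (y - 2) (z - y) (z - y) dA dB e1 e2 e3 hp hq hrho hroot' u w hs hne hpb).
Qed.
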